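(* Let $s=s(L)$ satisfy $\log^9L\le s\le L/\log^5L$. Let $\Xi_0$ be the random subset of $\mathbb{Z}_L^+=\{0,\dots,\lfloor(L-1)/2\rfloor\}$ obtained by including each element independently with probability $s/L$, and let $\Xi=\Xi_0\cup(-\Xi_0)$ (the support of the symmetric Bernoulli-Gaussian distribution with mean $0$, variance $\zeta^2$ and sparsity parameter $s$). Then for $L$ large enough, the distribution of $\Xi$ is typically $s$-sparse with sparsity constants $(1/2,2)$, and is $s/32$-cosine generic.
   Context: $\mathbb{Z}_L=\{\lfloor-(L-1)/2\rfloor,\dots,\lfloor(L-1)/2\rfloor\}$. A distribution of random subsets $\Xi\subset\mathbb{Z}_L$ is typically $s$-sparse with sparsity constants $(\alpha,\beta)$ if $\alpha s\le|\Xi|\le\beta s$ with probability $1-o_L(1)$. With $\mathcal{V}(\Xi,a)=\mathbf{1}_{\{0\in\Xi\}}+2\sum_{k\in\Xi\setminus\{0\}}\cos^2(2\pi ak/L)$, the distribution is $\Gamma$-cosine generic if with probability $1-o_L(1)$, $\min_{a\in\mathbb{Z}_L}\mathcal{V}(\Xi,a)\ge\Gamma(1-o_L(1))$. *)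

(* Defs.v *)
From HB Require Import structures.
From mathcomp Require Import all_boot all_order all_algebra.
From mathcomp Require Import all_classical all_reals all_analysis.
Set Implicit Arguments. Unset Strict Implicit. Unset Printing Implicit Defensive.

Import Order.TTheory GRing.Theory Num.Theory numFieldNormedType.Exports.
Local Open Scope classical_set_scope.
Local Open Scope ring_scope.

(* Z_L = { floor(-(L-1)/2), ..., floor((L-1)/2) } = { j - floor(L/2) : 0 <= j < L } *)
Definition ZL (L : nat) : seq int := [seq (j%:Z - (L./2)%:Z) | j <- iota 0 L].

(* |Z_L^+| where Z_L^+ = {0, ..., floor((L-1)/2)}; element i : 'I_(mplus L)
   of the finite type stands for the integer i. *)
Definition mplus (L : nat) : nat := ((L.-1)./2).+1.

Definition Xi0_mem (L : nat) (A : {set 'I_(mplus L)}) (k : int) : bool :=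
  [exists i : 'I_(mplus L), (i \in A) && ((i : nat)%:Z == k)].

Definition Xi_of (L : nat) (A : {set 'I_(mplus L)}) : pred int :=
  fun k => Xi0_mem A k || Xi0_mem A (- k).

Definition card_in (L : nat) (X : pred int) : nat := count X (ZL L).

Definition cosV (R : realType) (L : nat) (X : pred int) (a : int) : R :=
  (X 0)%:R + 2 * \sum_(k <- ZL L | X k && (k != 0))
                   (cos (2 * pi * a%:~R * k%:~R / L%:R)) ^+ 2.

Definition bern_prob (R : realType) (L : nat) (p : R)
  (E : pred {set 'I_(mplus L)}) : R :=
  \sum_(A : {set 'I_(mplus L)} | E A) p ^+ #|A| * (1 - p) ^+ (mplus L - #|A|).

Definition bg_prob (R : realType) (s : nat -> R) (L : nat)
  (E : pred {set 'I_(mplus L)}) : R := bern_prob (s L / L%:R) E.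
Arguments bg_prob {R} s L E.

Definition typically_sparse (R : realType) (s : nat -> R) (alpha beta : R) : Prop :=
  (fun L : nat => bg_prob s L [pred A | (alpha * s L <= (card_in L (Xi_of A))%:R)
                                       && ((card_in L (Xi_of A))%:R <= beta * s L)])
    @ \oo --> (1 : R).

Definition cosine_generic (R : realType) (s : nat -> R) (Gamma : nat -> R) : Prop :=
  exists eps : nat -> R, eps @ \oo --> (0 : R) /\
    (fun L : nat => bg_prob s L [pred A | all (fun a => Gamma L * (1 - eps L)
                                              <= cosV R L (Xi_of A) a) (ZL L)])
      @ \oo --> (1 : R).

(* Main.v *)
Require Import Defs.
From HB Require Import structures.
From mathcomp Require Import all_boot all_order all_algebra.
From mathcomp Require Import all_classical all_reals all_analysis.
From mathcomp Require Import ring lra zify.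
Set Implicit Arguments. Unset Strict Implicit. Unset Printing Implicit Defensive.
Import Order.TTheory GRing.Theory Num.Theory numFieldNormedType.Exports.
Local Open Scope ring_scope.

Lemma prod_w (R : realType) (n : nat) (p x : R) (S A : {set 'I_n}) :
  p ^+ #|A| * (1 - p) ^+ (n - #|A|) * x ^+ #|A :&: S| =
  \prod_i (if i \in A then p * (if i \in S then x else 1) else 1 - p).
Proof.
have -> : \prod_i (if i \in A then p * (if i \in S then x else 1) else 1 - p) =
  \prod_i (if i \in A then p else 1 - p) * \prod_i (if i \in A :&: S then x else 1).
  rewrite -big_split /=; apply: eq_bigr => i _.
  by rewrite inE; case: (i \in A); case: (i \in S); rewrite /= ?mulr1.
congr (_ * _); last by rewrite -big_mkcond /= prodr_const.
rewrite (bigID (mem A)) /=.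
under eq_bigr => i Hi do rewrite Hi.
under [X in _ = _ * X]eq_bigr => i Hi do rewrite (negbTE Hi).
rewrite prodr_const.
have -> : \prod_(i | i \notin A) (1 - p) = \prod_(i in ~: A) (1 - p).
  by apply: eq_bigl => i; rewrite inE.
rewrite prodr_const; have h := cardsC A; rewrite card_ord in h.
congr (_ * _ ^+ _); set a := #|A| in h *; set b := #|~: A| in h *; clearbody a b; lia.
Qed.

Lemma gen_fun (R : realType) (n : nat) (p x : R) (S : {set 'I_n}) :
  \sum_(A : {set 'I_n}) p ^+ #|A| * (1 - p) ^+ (n - #|A|) * x ^+ #|A :&: S|
  = (1 - p + p * x) ^+ #|S|.
Proof.
rewrite (eq_bigr _ (fun A _ => @prod_w R n p x S A)).
rewrite -(bigA_distr _ _ (fun i => p * (if i \in S then x else 1)) (fun=> 1 - p)) /=.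
rewrite (eq_bigr (fun i => if i \in S then 1 - p + p * x else 1)); last first.
  by move=> i _; case: (i \in S); ring.
by rewrite -big_mkcond /= prodr_const.
Qed.

Definition wt (R : realType) (n : nat) (p : R) (A : {set 'I_n}) : R :=
  p ^+ #|A| * (1 - p) ^+ (n - #|A|).

Lemma wt_ge0 (R : realType) n (p : R) A : 0 <= p <= 1 -> 0 <= wt p (A : {set 'I_n}).
Proof.
move=> /andP[p0 p1]; rewrite /wt mulr_ge0 // exprn_ge0 //; lra.
Qed.

Lemma wt_total (R : realType) n (p : R) : \sum_(A : {set 'I_n}) wt p A = 1.
Proof.
have := gen_fun p 1 (@finset.set0 (ordinal n)); rewrite cards0 expr0 => <-.
by apply: eq_bigr => A _; rewrite expr1n mulr1.
Qed.

Lemma wt_compl (R : realType) n (p : R) (E : pred {set 'I_n}) :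
  \sum_(A | E A) wt p A = 1 - \sum_(A | ~~ E A) wt p A.
Proof. by rewrite -(@wt_total R n p) [in RHS](bigID E) /= addrK. Qed.

Lemma wt_mono (R : realType) n (p : R) (E F : pred {set 'I_n}) :
  0 <= p <= 1 -> (forall A, E A -> F A) ->
  \sum_(A | E A) wt p A <= \sum_(A | F A) wt p A.
Proof.
move=> hp hEF; rewrite [X in X <= _]big_mkcond [X in _ <= X]big_mkcond /=.
apply: ler_sum => A _; case hE: (E A); first by rewrite hEF.
by case: (F A) => //; apply: wt_ge0.
Qed.

Lemma wt_union (R : realType) n (p : R) (E F G : pred {set 'I_n}) :
  0 <= p <= 1 -> (forall A, E A -> F A || G A) ->
  \sum_(A | E A) wt p A <= \sum_(A | F A) wt p A + \sum_(A | G A) wt p A.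
Proof.
move=> hp hEF; rewrite [X in X <= _]big_mkcond [X in _ <= X + _]big_mkcond.
rewrite [X in _ <= _ + X]big_mkcond -big_split /=.
apply: ler_sum => A _; have w0 := wt_ge0 A hp.
case hE: (E A).
  by move: (hEF A hE); case: (F A); case: (G A) => //= _; lra.
by case: (F A); case: (G A); lra.
Qed.

Lemma wt_union_seq (R : realType) n (p : R) (T : Type) (f : {set 'I_n} -> T -> bool)
  (s : seq T) : 0 <= p <= 1 ->
  \sum_(A | ~~ all (f A) s) wt p A <= \sum_(a <- s) \sum_(A | ~~ f A a) wt p A.
Proof.
move=> hp; elim: s => [|a s IH].
  by rewrite big_nil big_pred0.
rewrite big_cons; apply: le_trans (lerD (lexx _) IH).
by apply: wt_union => // A /=; rewrite negb_and.
Qed.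

Lemma wmarkov (R : realType) n (p y g : R) (S : {set 'I_n}) (E : pred {set 'I_n}) :
  0 <= p <= 1 -> 0 <= y -> 0 <= g ->
  (forall A, E A -> 1 <= g * y ^+ #|A :&: S|) ->
  \sum_(A | E A) wt p A <= g * (1 - p + p * y) ^+ #|S|.
Proof.
move=> hp y0 g0 hE.
rewrite -gen_fun mulr_sumr.
apply: (@le_trans _ _ (\sum_(A | E A) g * (wt p A * y ^+ #|A :&: S|))).
  apply: ler_sum => A HA; have w0 := wt_ge0 A hp.
  rewrite mulrCA; rewrite -{1}(mulr1 (wt p A)); apply: ler_wpM2l => //.
  exact: hE.
rewrite big_mkcond /=; apply: ler_sum => A _.
have w0 := wt_ge0 A hp.
case: (E A) => //; rewrite mulr_ge0 // mulr_ge0 // exprn_ge0 //.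
Qed.

Lemma pow_exp (R : realType) (p y : R) (k : nat) :
  0 <= 1 - p + p * y -> (1 - p + p * y) ^+ k <= expR (p * (y - 1) * k%:R).
Proof.
move=> h; rewrite expRM_natr; apply: lerXn2r => //.
  by rewrite nnegrE expR_ge0.
by apply: le_trans (expR_ge1Dx _); lra.
Qed.

Lemma ZL_uniq L : uniq (ZL L).
Proof. rewrite map_inj_uniq ?iota_uniq // => x y /addIr; by case. Qed.

Lemma size_ZL L : size (ZL L) = L.
Proof. by rewrite size_map size_iota. Qed.

Lemma half_facts L : (0 < L)%N -> ((L.-1)./2 + L./2 = L.-1)%N.
Proof. move=> L0; rewrite -!divn2; lia. Qed.

Lemma memZL_pos L (i : nat) : (0 < L)%N -> (i < mplus L)%N -> (i%:Z \in ZL L).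
Proof.
move=> L0 hi; apply/mapP; exists (i + L./2)%N.
  rewrite mem_iota add0n; move: hi; rewrite /mplus -!divn2; lia.
by rewrite PoszD addrK.
Qed.

Lemma memZL_neg L (i : nat) : (0 < L)%N -> (i < mplus L)%N -> (- (i%:Z) \in ZL L).
Proof.
move=> L0 hi; have hi2 : (i <= L./2)%N by move: hi; rewrite /mplus -!divn2; lia.
apply/mapP; exists (L./2 - i)%N.
  rewrite mem_iota add0n; move: hi; rewrite /mplus -!divn2; lia.
rewrite -subzn //; ring.
Qed.

Lemma count_le_card L (P : pred int) (B : {set 'I_(mplus L)}) (g : nat -> int) :
  injective g -> (forall k, P k -> exists2 i, i \in B & g (val i) = k) ->
  (count P (ZL L) <= #|B|)%N.
Proof.
move=> ginj hP; rewrite -size_filter cardE -(size_map (fun i => g (val i))).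
apply: uniq_leq_size; first by rewrite filter_uniq // ZL_uniq.
move=> k; rewrite mem_filter => /andP[/hP [i iB <-] _].
by apply/mapP; exists i => //; rewrite mem_enum.
Qed.

Lemma count_ge_card L (P : pred int) (B : {set 'I_(mplus L)}) (g : nat -> int) :
  injective g -> (forall i, i \in B -> P (g (val i)) && (g (val i) \in ZL L)) ->
  (#|B| <= count P (ZL L))%N.
Proof.
move=> ginj hP; rewrite -size_filter cardE -(size_map (fun i => g (val i))).
apply: uniq_leq_size.
  rewrite map_inj_uniq ?enum_uniq // => x y /ginj; exact: val_inj.
move=> k /mapP [i]; rewrite mem_enum => iB ->.
by rewrite mem_filter; apply: hP.
Qed.

Lemma Posz_inj : injective Posz. Proof. by move=> x y []. Qed.
Lemma nPosz_inj : injective (fun i : nat => - (i%:Z)).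
Proof. by move=> x y /oppr_inj []. Qed.

Lemma card_upper L (A : {set 'I_(mplus L)}) : (card_in L (Xi_of A) <= 2 * #|A|)%N.
Proof.
rewrite /card_in.
have -> : count (Xi_of A) (ZL L) =
   count (predU (Xi0_mem A) (fun k => Xi0_mem A (- k))) (ZL L) by [].
have h := count_predUI (Xi0_mem A) (fun k => Xi0_mem A (- k)) (ZL L).
have h1 : (count (Xi0_mem A) (ZL L) <= #|A|)%N.
  apply: (@count_le_card L _ A Posz Posz_inj) => k /existsP [i /andP[iA /eqP <-]].
  by exists i.
have h2 : (count (fun k => Xi0_mem A (- k)) (ZL L) <= #|A|)%N.
  apply: (@count_le_card L _ A _ nPosz_inj) => k /existsP [i /andP[iA /eqP hi]].
  by exists i => //; rewrite hi opprK.
apply: leq_trans (leq_addr (count (predI (Xi0_mem A) (fun k => Xi0_mem A (- k))) (ZL L)) _) _.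
rewrite h mul2n -addnn; exact: leq_add.
Qed.

Lemma card_lower L (A : {set 'I_(mplus L)}) : (0 < L)%N ->
  (2 * #|A| <= card_in L (Xi_of A) + 2)%N.
Proof.
move=> L0; rewrite /card_in.
pose P1 := fun k : int => (0 < k) && Xi0_mem A k.
pose P2 := fun k : int => (k < 0) && Xi0_mem A (- k).
have hsub : (count (predU P1 P2) (ZL L) <= count (Xi_of A) (ZL L))%N.
  apply: sub_count => k /orP [/andP[_ h']|/andP[_ h']]; by rewrite /Xi_of h' ?orbT.
have h := count_predUI P1 P2 (ZL L).
have h0 : count (predI P1 P2) (ZL L) = 0%N.
  apply/eqP; rewrite -leqn0 leqNgt -has_count; apply/hasPn => k _ /=.
  rewrite /P1 /P2 /=; case: (ltrgtP k 0) => //= _; by rewrite andbF.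
have hB := cardsD1 ord0 A.
have hi0 : forall i, i \in A :\ ord0 -> (0 < val i)%N /\ Xi0_mem A (val i)%:Z.
  move=> i; rewrite !inE => /andP[i0 iA]; split.
    by rewrite lt0n; move: i0; apply: contra => /eqP h'; apply/eqP/val_inj.
  by apply/existsP; exists i; rewrite iA eqxx.
have h1 : (#|A :\ ord0| <= count P1 (ZL L))%N.
  apply: (@count_ge_card L _ _ Posz Posz_inj) => i /hi0 [i0 hx].
  rewrite /P1 hx (memZL_pos L0 (ltn_ord i)); apply/andP; split=> //; apply/andP; split => //; lia.
have h2 : (#|A :\ ord0| <= count P2 (ZL L))%N.
  apply: (@count_ge_card L _ _ _ nPosz_inj) => i /hi0 [i0 hx].
  rewrite /P2 opprK hx (memZL_neg L0 (ltn_ord i)); apply/andP; split=> //; apply/andP; split => //; lia.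
have hU : (2 * #|A :\ ord0| <= count (Xi_of A) (ZL L))%N.
  have h3 : (count P1 (ZL L) + count P2 (ZL L) <= count (Xi_of A) (ZL L))%N.
    by rewrite -h h0 addn0.
  apply: leq_trans h3; rewrite mul2n -addnn; exact: leq_add.
have hA : (#|A| <= #|A :\ ord0| + 1)%N by rewrite hB addnC leq_add2l leq_b1.
move: hU hA; set b := #|A :\ ord0|; set c := count _ _; move=> hU hA; lia.
Qed.

Definition th (R : realType) L (a k : int) : R := 2 * pi * a%:~R * k%:~R / L%:R.
Definition Sa (R : realType) L (a : int) : {set 'I_(mplus L)} :=
  [set i : 'I_(mplus L) | (0 < val i)%N && (1/4 <= cos (th R L a (val i)%:Z) ^+ 2)].

Lemma sum_const_seq (R : realType) (s : seq int) (Q : pred int) (c : R) :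
  \sum_(k <- s | Q k) c = c *+ count Q s.
Proof.
elim: s => [|x s IH]; first by rewrite big_nil.
rewrite big_cons /= IH; case: (Q x) => //=; by rewrite add1n mulrS.
Qed.

Lemma cos_lower (R : realType) L (A : {set 'I_(mplus L)}) (a : int) : (0 < L)%N ->
  #|A :&: Sa R L a|%:R / 2 <= cosV R L (Xi_of A) a.
Proof.
move=> L0; rewrite /cosV.
pose Q := fun k : int => [exists i, (i \in A :&: Sa R L a) && ((val i)%:Z == k)].
have h1 : \sum_(k <- ZL L | Q k) cos (th R L a k) ^+ 2 <=
   \sum_(k <- ZL L | Xi_of A k && (k != 0)) cos (2 * pi * a%:~R * k%:~R / L%:R) ^+ 2.
  rewrite [X in _ <= X]big_mkcond [X in X <= _]big_mkcond; apply: ler_sum => k _.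
  case hQ: (Q k).
    move/existsP: hQ => [i /andP[/setIP[iA]]]; rewrite inE => /andP[i0 _] /eqP <-.
    have -> : Xi_of A (val i)%:Z && ((val i)%:Z != 0).
      apply/andP; split; last by rewrite eqz_nat -lt0n.
      by rewrite /Xi_of; apply/orP; left; apply/existsP; exists i; rewrite iA eqxx.
    by [].
  by case: (_ && _) => //; rewrite sqr_ge0.
have h2 : (count Q (ZL L))%:R / 4 <= \sum_(k <- ZL L | Q k) cos (th R L a k) ^+ 2.
  have -> : (count Q (ZL L))%:R / 4 = \sum_(k <- ZL L | Q k) (1/4 : R).
    rewrite sum_const_seq -mulr_natr; lra.
  apply: ler_sum => k /existsP [i /andP[/setIP[_]]]; rewrite inE => /andP[_ hc] /eqP <-.
  exact: hc.
have h3 : (#|A :&: Sa R L a| <= count Q (ZL L))%N.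
  apply: (@count_ge_card L _ _ Posz Posz_inj) => i iS.
  rewrite (memZL_pos L0 (ltn_ord i)) andbT; apply/existsP; exists i; by rewrite iS eqxx.
have h3' : (#|A :&: Sa R L a|%:R : R) <= (count Q (ZL L))%:R by rewrite ler_nat.
have h0 : (0 : R) <= (Xi_of A 0)%:R by [].
lra.
Qed.

Lemma th_double (R : realType) L a (k : nat) :
  th R L a (2 * k)%N%:Z = th R L a k%:Z *+ 2.
Proof. rewrite /th -!pmulrn natrM mulr2n; ring. Qed.

Lemma cos_pair (R : realType) (x : R) :
  cos x ^+ 2 < 1/4 -> 1/4 <= cos (x *+ 2) ^+ 2.
Proof.
rewrite cos_mulr2n mulr2n; set u := cos x ^+ 2 => hu.
have u0 : 0 <= u by rewrite /u sqr_ge0.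
rewrite expr2; nra.
Qed.

Lemma Sa_large (R : realType) L a : (20 <= L)%N -> (L <= 10 * #|Sa R L a|)%N.
Proof.
move=> L20.
set h := ((L.-1)./2)./2.
have hb : forall j : 'I_h, (2 * j.+1 < mplus L)%N.
  case=> k /= hk; move: hk; rewrite /h /mplus -!divn2; lia.
pose u := fun j : 'I_h => (inord j.+1 : 'I_(mplus L)).
pose v := fun j : 'I_h => (inord (2 * j.+1) : 'I_(mplus L)).
have uv : forall j, (u j : nat) = j.+1 /\ (v j : nat) = (2 * j.+1)%N.
  move=> j; have := hb j; rewrite /mplus => hj; rewrite /u /v; split; rewrite inordK //; lia.
have uinj : injective u.
  move=> j1 j2 e; apply: val_inj; have [e1 _] := uv j1; have [e2 _] := uv j2.
  by move: (congr1 (@nat_of_ord _) e); rewrite e1 e2 => -[].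
have vinj : injective v.
  move=> j1 j2 e; apply: val_inj; have [_ e1] := uv j1; have [_ e2] := uv j2.
  move: (congr1 (@nat_of_ord _) e); rewrite e1 e2 => /eqP; rewrite eqn_mul2l /= => /eqP [] //.
have key : forall j, (u j \in Sa R L a) || (v j \in Sa R L a).
  move=> j; have [e1 e2] := uv j; rewrite !inE /= e1 e2 /=.
  case: (lerP (1/4) (cos (th R L a j.+1%:Z) ^+ 2)) => //= hc.
  by rewrite th_double; apply: cos_pair.
set P1 := [set j | u j \in Sa R L a]; set P2 := [set j | v j \in Sa R L a].
have hT : (h <= #|P1 :|: P2|)%N.
  have : (#|'I_h| <= #|P1 :|: P2|)%N.
    by apply: subset_leq_card; apply/fintype.subsetP => j _; move: (key j); rewrite !inE.
  by rewrite card_ord.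
have hU := (leq_card_setU P1 P2).1.
have c1 : (#|P1| <= #|Sa R L a|)%N.
  rewrite -(card_imset P1 uinj); apply: subset_leq_card; apply/fintype.subsetP => x /imsetP [j].
  by rewrite inE => hj ->.
have c2 : (#|P2| <= #|Sa R L a|)%N.
  rewrite -(card_imset P2 vinj); apply: subset_leq_card; apply/fintype.subsetP => x /imsetP [j].
  by rewrite inE => hj ->.
have hh : (L <= 4 * h + 4)%N by rewrite /h -!divn2; lia.
lia.
Qed.

Lemma exp_small (R : realType) (Lr E : R) : 0 < Lr ->
  E <= - (ln Lr + ln Lr) -> expR E <= (Lr * Lr)^-1.
Proof.
move=> L0 hE; apply: le_trans (_ : expR (- (ln Lr + ln Lr)) <= _).
  by rewrite ler_expR.
by rewrite expRN expRD lnK.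
Qed.

Lemma exp_quarter (R : realType) : expR (1/4 : R) <= 4/3.
Proof.
have h1 := expR_ge1Dx (- (1/4) : R).
have h2 : expR (1/4 : R) * expR (- (1/4)) = 1 by rewrite -expRD subrr expR0.
have h3 := expR_gt0 (1/4 : R).
nra.
Qed.

Lemma exp_mhalf (R : realType) : expR (- (1/2) : R) <= 2/3.
Proof.
have h1 := expR_ge1Dx (1/2 : R).
have h2 : expR (1/2 : R) * expR (- (1/2)) = 1 by rewrite -expRD subrr expR0.
have h3 := expR_gt0 (- (1/2) : R).
nra.
Qed.

Lemma exp_ge1 (R : realType) (x : R) : 0 <= x -> 1 <= expR x.
Proof. by move=> x0; rewrite -expR0 ler_expR. Qed.

Lemma mplus_bounds L : (0 < L)%N -> (2 * mplus L <= L + 1)%N /\ (L <= 2 * mplus L)%N.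
Proof. rewrite /mplus; case: L => [|L] //= _; rewrite -?divn2; split; lia. Qed.

Lemma pm_up (R : realType) L (sL : R) : 0 < L%:R :> R -> 0 <= sL -> sL <= L%:R ->
  sL / L%:R * (mplus L)%:R <= sL / 2 + 1 / 2.
Proof.
move=> L0 s0 sL1; have [h _] : (2 * mplus L <= L + 1)%N /\ (L <= 2 * mplus L)%N.
  by apply: mplus_bounds; rewrite -(ltr_nat R).
have hm : 2 * (mplus L)%:R <= L%:R + 1 :> R.
  by move: h; rewrite -(ler_nat R) natrM natrD.
rewrite mulrAC ler_pdivrMr //; nra.
Qed.

Lemma pm_lo (R : realType) L (sL : R) (n : nat) (c : R) : 0 < L%:R :> R -> 0 <= sL -> 0 < c ->
  L%:R <= c * n%:R -> sL / c <= sL / L%:R * n%:R.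
Proof.
move=> L0 s0 c0 hm.
rewrite mulrAC ler_pdivlMr // mulrAC ler_pdivrMr //; nra.
Qed.

Lemma upper_tail (R : realType) L (sL : R) : 0 < L%:R :> R -> 0 <= sL -> sL <= L%:R ->
  6561 * ln L%:R <= sL -> 3 <= ln (L%:R : R) ->
  \sum_(A : {set 'I_(mplus L)} | sL < #|A|%:R) wt (sL / L%:R) A <= (L%:R * L%:R)^-1.
Proof.
move=> L0 s0 sL1 sl l3.
set p := sL / L%:R.
have p0 : 0 <= p by rewrite /p divr_ge0 // ltW.
have p1 : p <= 1 by rewrite /p ler_pdivrMr // mul1r.
have hp : 0 <= p <= 1 by rewrite p0 p1.
apply: le_trans (@wmarkov R (mplus L) p (expR (1/4)) (expR (- (sL / 4))) [set: 'I_(mplus L)] (fun A : {set 'I_(mplus L)} => sL < #|A|%:R) hp (expR_ge0 _) (expR_ge0 _) _) _.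
  move=> A hA; rewrite finset.setIT -expRM_natl -expRD; apply: exp_ge1; lra.
rewrite cardsT card_ord.
have y1 := exp_quarter R.
have y0 := exp_ge1 (_ : 0 <= 1/4 :> R).
have pm := pm_up L0 s0 sL1.
have pm0 : 0 <= p * (mplus L)%:R by rewrite mulr_ge0.
apply: le_trans (ler_wpM2l (expR_ge0 _) (@pow_exp R p (expR (1/4)) (mplus L) _)) _.
  nra.
rewrite -expRD; apply: exp_small => //.
have -> : p * (expR (1 / 4) - 1) * (mplus L)%:R = (expR (1/4) - 1) * (p * (mplus L)%:R) by ring.
rewrite /p in pm pm0 *.
nra.
Qed.

Lemma lower_tail (R : realType) L (sL : R) : 0 < L%:R :> R -> 0 <= sL -> sL <= L%:R ->
  6561 * ln L%:R <= sL -> 3 <= ln (L%:R : R) ->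
  \sum_(A : {set 'I_(mplus L)} | #|A|%:R < sL / 4 + 1) wt (sL / L%:R) A <= (L%:R * L%:R)^-1.
Proof.
move=> L0 s0 sL1 sl l3.
set p := sL / L%:R.
have p0 : 0 <= p by rewrite /p divr_ge0 // ltW.
have p1 : p <= 1 by rewrite /p ler_pdivrMr // mul1r.
have hp : 0 <= p <= 1 by rewrite p0 p1.
apply: le_trans (@wmarkov R (mplus L) p (expR (- (1/2))) (expR ((sL / 4 + 1) / 2)) [set: 'I_(mplus L)] (fun A : {set 'I_(mplus L)} => #|A|%:R < sL / 4 + 1) hp (expR_ge0 _) (expR_ge0 _) _) _.
  move=> A hA; rewrite finset.setIT -expRM_natl -expRD; apply: exp_ge1; lra.
rewrite cardsT card_ord.
have y1 := exp_mhalf R.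
have y0 := expR_ge0 (- (1/2) : R).
have [_ hm] : (2 * mplus L <= L + 1)%N /\ (L <= 2 * mplus L)%N.
  by apply: mplus_bounds; rewrite -(ltr_nat R).
have hm' : L%:R <= 2 * (mplus L)%:R :> R by move: hm; rewrite -(ler_nat R) natrM.
have pm := pm_lo L0 s0 (ltr0Sn _ 1) hm'.
have pm0 : 0 <= p * (mplus L)%:R by rewrite mulr_ge0.
apply: le_trans (ler_wpM2l (expR_ge0 _) (@pow_exp R p (expR (- (1/2))) (mplus L) _)) _.
  nra.
rewrite -expRD; apply: exp_small => //.
have -> : p * (expR (- (1 / 2)) - 1) * (mplus L)%:R = (expR (- (1/2)) - 1) * (p * (mplus L)%:R) by ring.
rewrite /p in pm pm0 *.
nra.
Qed.

Lemma cos_tail (R : realType) L (sL : R) (a : int) : (20 <= L)%N -> 0 < L%:R :> R -> 0 <= sL -> sL <= L%:R ->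
  6561 * ln L%:R <= sL -> 3 <= ln (L%:R : R) ->
  \sum_(A : {set 'I_(mplus L)} | #|A :&: Sa R L a|%:R < sL / 16) wt (sL / L%:R) A
    <= (L%:R * L%:R)^-1.
Proof.
move=> L20 L0 s0 sL1 sl l3.
set p := sL / L%:R.
have p0 : 0 <= p by rewrite /p divr_ge0 // ltW.
have p1 : p <= 1 by rewrite /p ler_pdivrMr // mul1r.
have hp : 0 <= p <= 1 by rewrite p0 p1.
apply: le_trans (@wmarkov R (mplus L) p (expR (- (1/2))) (expR (sL / 32)) (Sa R L a) (fun A : {set 'I_(mplus L)} => #|A :&: Sa R L a|%:R < sL / 16) hp (expR_ge0 _) (expR_ge0 _) _) _.
  move=> A hA; rewrite -expRM_natl -expRD; apply: exp_ge1; lra.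
have y1 := exp_mhalf R.
have y0 := expR_ge0 (- (1/2) : R).
have hm := Sa_large R a L20.
have hm' : L%:R <= 10 * #|Sa R L a|%:R :> R by move: hm; rewrite -(ler_nat R) natrM.
have pm := pm_lo L0 s0 (ltr0Sn _ 9) hm'.
have pm0 : 0 <= p * #|Sa R L a|%:R by rewrite mulr_ge0.
apply: le_trans (ler_wpM2l (expR_ge0 _) (@pow_exp R p (expR (- (1/2))) #|Sa R L a| _)) _.
  nra.
rewrite -expRD; apply: exp_small => //.
have -> : p * (expR (- (1 / 2)) - 1) * #|Sa R L a|%:R = (expR (- (1/2)) - 1) * (p * #|Sa R L a|%:R) by ring.
rewrite /p in pm pm0 *.
nra.
Qed.

Local Open Scope classical_set_scope.
Local Open Scope ring_scope.

Lemma cvg_to1 (R : realType) (u : nat -> R) (N0 : nat) (C : R) :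
  (forall L, (N0 <= L)%N -> `|1 - u L| <= C / L%:R) -> u @ \oo --> (1 : R).
Proof.
move=> H; apply/cvgrPdist_le => e e0.
exists (maxn N0.+1 (Num.trunc (C / e)).+1) => // L /= hL.
have hL1 : (N0 <= L)%N by move: hL; rewrite geq_max => /andP[/ltnW]. 
have hL2 : ((Num.trunc (C / e)).+1 <= L)%N by move: hL; rewrite geq_max => /andP[].
have Lpos : (0 : R) < L%:R by rewrite ltr0n; move: hL; rewrite geq_max; lia.
apply: le_trans (H L hL1) _.
have h1 := truncnS_gt (C / e).
have h2 : ((Num.trunc (C / e)).+1%:R : R) <= L%:R by rewrite ler_nat.
have h3 : C / e < L%:R by apply: lt_le_trans h1 h2.
rewrite ltr_pdivrMr // in h3.
rewrite ler_pdivrMr //; lra.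
Qed.


Lemma sum_const_all (R : realType) (s : seq int) (c : R) :
  \sum_(a <- s) c = c *+ size s.
Proof.
elim: s => [|x s IH]; first by rewrite big_nil.
by rewrite big_cons IH /= mulrS.
Qed.

Lemma inv_sq_le (R : realType) (Lr : R) : 1 <= Lr -> (Lr * Lr)^-1 <= Lr^-1.
Proof.
move=> h; rewrite invfM.
have h0 : 0 < Lr^-1 by rewrite invr_gt0; lra.
have h1 : Lr^-1 <= 1 by rewrite invf_le1 //; lra.
nra.
Qed.

Lemma basic (R : realType) (s : nat -> R) N M L :
  (forall L, (N <= L)%N -> ln (L%:R : R) ^+ 9 <= s L <= L%:R / ln (L%:R : R) ^+ 5) ->
  expR 3 < M%:R :> R -> (maxn (maxn N 20) M <= L)%N ->
  [/\ (20 <= L)%N, 0 < L%:R :> R, 3 <= ln (L%:R : R), 6561 * ln (L%:R : R) <= s L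
    & s L <= L%:R].
Proof.
move=> hN hM hL.
have hNL : (N <= L)%N by move: hL; rewrite !geq_max => /andP[/andP[]].
have L20 : (20 <= L)%N by move: hL; rewrite !geq_max => /andP[/andP[]].
have ML : (M <= L)%N by move: hL; rewrite !geq_max => /andP[].
have L0 : 0 < L%:R :> R by rewrite ltr0n; lia.
have l3 : 3 <= ln (L%:R : R).
  have h1 : expR 3 <= L%:R :> R by apply: le_trans (ltW hM) _; rewrite ler_nat.
  have h2 := expR_gt0 (3 : R).
  rewrite -(expRK 3) ler_ln // posrE.
set l := ln (L%:R : R) in l3 *.
have [h9 h5] := andP (hN L hNL); rewrite -/l in h9 h5.
have l2 : 9 <= l * l by nra.
have l4 : 81 <= (l * l) * (l * l) by nra.
have l8 : 6561 <= ((l * l) * (l * l)) * ((l * l) * (l * l)) by nra.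
have e9 : l ^+ 9 = ((l * l) * (l * l)) * ((l * l) * (l * l)) * l by rewrite !exprS expr0; ring.
have e5 : l ^+ 5 = ((l * l) * (l * l)) * l by rewrite !exprS expr0; ring.
split => //.
  rewrite e9 in h9; nra.
have l5 : 1 <= l ^+ 5 by rewrite e5; nra.
apply: le_trans h5 _; rewrite ler_pdivrMr; last by lra.
nra.
Qed.

Theorem lemma5p8 (R : realType) (s : nat -> R)
  (hs : exists N : nat, forall L : nat, (N <= L)%N ->
          (ln (L%:R : R)) ^+ 9 <= s L <= L%:R / (ln (L%:R : R)) ^+ 5) :
  typically_sparse s (1 / 2) 2 /\ cosine_generic s (fun L => s L / 32).
Proof.
case: hs => N hN.
have [M hM] : exists M : nat, expR 3 < M%:R :> R.
  by exists (Num.trunc (expR (3 : R))).+1; exact: truncnS_gt.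
have bgE : forall L (E : pred {set 'I_(mplus L)}),
    bg_prob s L E = \sum_(A | E A) wt (s L / L%:R) A by [].
have ns : forall x : R, 1 - (1 - x) = x by move=> x; ring.
split.
  apply: (@cvg_to1 R _ (maxn (maxn N 20) M) 2) => L hL.
  have [L20 L0 l3 sl sL1] := basic hN hM hL.
  have s0 : 0 <= s L by lra.
  have hp : 0 <= s L / L%:R <= 1.
    by apply/andP; split; [rewrite divr_ge0 // ltW | rewrite ler_pdivrMr // mul1r].
  rewrite bgE wt_compl ns ger0_norm; last by apply: sumr_ge0 => A _; apply: wt_ge0.
  apply: le_trans (@wt_union R (mplus L) _ _ (fun A => s L < #|A|%:R)
     (fun A => #|A|%:R < s L / 4 + 1) hp _) _.
    move=> A hA.
    case: (ltrP (s L) #|A|%:R) => //= h1; case: (ltrP (#|A|%:R) (s L / 4 + 1)) => //= h2.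
    exfalso; move: hA => /negP; apply; rewrite /=.
    have cu := card_upper A; have cl := card_lower A (leq_trans (isT : (0 < 20)%N) L20).
    have cu' : (card_in L (Xi_of A))%:R <= 2 * #|A|%:R :> R by move: cu; rewrite -(ler_nat R) natrM.
    have cl' : 2 * #|A|%:R <= (card_in L (Xi_of A))%:R + 2 :> R by move: cl; rewrite -(ler_nat R) natrM natrD.
    apply/andP; split; lra.
  have t4 : 1 <= L%:R :> R by rewrite ler1n (leq_trans _ L20).
  have t3 := inv_sq_le t4.
  apply: le_trans (lerD (upper_tail L0 s0 sL1 sl l3) (lower_tail L0 s0 sL1 sl l3)) _.
  have e2 : 2 / L%:R = L%:R^-1 + L%:R^-1 :> R by rewrite mulrDl mul1r.
  by rewrite e2; apply: lerD.
exists (fun _ => 0); split; first exact: cvg_cst.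
apply: (@cvg_to1 R _ (maxn (maxn N 20) M) 1) => L hL.
have [L20 L0 l3 sl sL1] := basic hN hM hL.
have s0 : 0 <= s L by lra.
have hp : 0 <= s L / L%:R <= 1.
  by apply/andP; split; [rewrite divr_ge0 // ltW | rewrite ler_pdivrMr // mul1r].
rewrite bgE wt_compl ns ger0_norm; last by apply: sumr_ge0 => A _; apply: wt_ge0.
apply: le_trans (@wt_union_seq R (mplus L) _ int
   (fun A a => s L / 32 * (1 - 0) <= cosV R L (Xi_of A) a) (ZL L) hp) _.
apply: le_trans (_ : \sum_(a <- ZL L) (L%:R * L%:R)^-1 <= _).
  apply: ler_sum => a _.
  apply: le_trans (cos_tail a L20 L0 s0 sL1 sl l3).
  apply: wt_mono => // A; rewrite -ltNge => hA.
  have := cos_lower R A a (leq_trans (isT : (0 < 20)%N) L20); lra.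
rewrite sum_const_all size_ZL -(mulr_natr ((L%:R * L%:R)^-1) L) invfM -mulrA mulVf ?mulr1 ?mul1r //; exact: lt0r_neq0.
Qed.
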